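(* Let $D$ be a squarefree integer and let $q>3$ be a prime dividing $D$. Then $H_D^{(q)}=\{kP : k\text{ odd and } x(kP)\equiv -18\pmod q\}$; in particular $H_D^{(q)}$ does not depend on $D$.
   Context: $C_D\subset\mathbb{P}^4$ is the curve over $\mathbb{Q}$ given by $X_0^2-2X_1^2+X_2^2=0$, $X_1^2-2X_2^2+DX_3^2=0$, $X_2^2-2DX_3^2+X_4^2=0$; $C_D(\mathbb{F}_q)$ denotes the $\mathbb{F}_q$-points of the variety defined by these equations reduced mod $q$. $E^{(1)}: y^2=x(x+2)(x+6)$, $P=(6,24)\in E^{(1)}(\mathbb{Q})$, $H=\{kP: k\text{ odd}\}$, and $\phi:C_D\to E^{(1)}$ is $\phi([x_0:\dots:x_4])=(6x_0^2/x_4^2,\,24x_0x_1x_2/x_4^3)$, with $\phi_q$ its reduction mod $q$. $\mathrm{red}_q:E^{(1)}(\mathbb{Q})\to E^{(1)}(\mathbb{F}_q)$ is reduction mod $q$, and $H_D^{(q)}:=\{R\in H : \mathrm{red}_q(R)\in\phi_q(C_D(\mathbb{F}_q))\}$. The condition $x(kP)\equiv-18\pmod q$ means the reduction of $kP$ has $x$-coordinate $-18\in\mathbb{F}_q$. *)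

(* Defs.v *)
From HB Require Import structures.
From mathcomp Require Import all_boot all_order all_algebra all_field.
Set Implicit Arguments. Unset Strict Implicit. Unset Printing Implicit Defensive.
Import Order.TTheory GRing.Theory Num.Theory.
Local Open Scope ring_scope.

(* Points of E^(1) : y^2 = x(x+2)(x+6) = x^3 + 8x^2 + 12x over a field K,
   in affine coordinates; [None] is the point at infinity O. *)
Definition ecpt (K : Type) := option (K * K).

Section EllipticGroupLaw.
Variable K : fieldType.

Definition E1_on (R : ecpt K) : bool :=
  if R is Some (x, y) then y ^+ 2 == x * (x + 2%:R) * (x + 6%:R) else true.

Definition E1_neg (R : ecpt K) : ecpt K :=
  if R is Some (x, y) then Some (x, - y) else None.

(* chord-and-tangent addition for y^2 = x^3 + a2 x^2 + a4 x, a2 = 8, a4 = 12 *)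
Definition E1_add (R S : ecpt K) : ecpt K :=
  match R, S with
  | None, _ => S
  | _, None => R
  | Some (x1, y1), Some (x2, y2) =>
      if (x1 == x2) && (y1 + y2 == 0) then None
      else
        let l := if x1 == x2
                 then (3%:R * x1 ^+ 2 + 16%:R * x1 + 12%:R) / (2%:R * y1)
                 else (y2 - y1) / (x2 - x1) in
        let x3 := l ^+ 2 - 8%:R - x1 - x2 in
        Some (x3, - (y1 + l * (x3 - x1)))
  end.

Fixpoint E1_muln (n : nat) (R : ecpt K) : ecpt K :=
  if n is n'.+1 then E1_add R (E1_muln n' R) else None.

Definition E1_mulz (k : int) (R : ecpt K) : ecpt K :=
  match k with
  | Posz n => E1_muln n R
  | Negz n => E1_neg (E1_muln n.+1 R)
  end.
End EllipticGroupLaw.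

Definition P1 : ecpt rat := Some (6%:R, 24%:R).

Definition inH (R : ecpt rat) : Prop :=
  exists k : int, ~~ (2 %| k)%Z /\ R = E1_mulz k P1.

(* reduction of a rational number mod q (meaningful when q does not divide
   the denominator) *)
Definition rat_red (q : nat) (r : rat) : 'F_q :=
  (numq r)%:~R / (denq r)%:~R.

Definition red (q : nat) (R : ecpt rat) : ecpt 'F_q :=
  match R with
  | None => None
  | Some (x, y) =>
      if ((q%:Z %| denq x)%Z || (q%:Z %| denq y)%Z) then None
      else Some (rat_red q x, rat_red q y)
  end.

Definition CD_eqs (q : nat) (D : int) (x0 x1 x2 x3 x4 : 'F_q) : bool :=
  [&& x0 ^+ 2 - 2%:R * x1 ^+ 2 + x2 ^+ 2 == 0,
      x1 ^+ 2 - 2%:R * x2 ^+ 2 + D%:~R * x3 ^+ 2 == 0 &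
      x2 ^+ 2 - 2%:R * D%:~R * x3 ^+ 2 + x4 ^+ 2 == 0].

(* Representatives of projective
   points are taken as vectors in F_q^5; the formula is homogeneous of
   degree 0, so the image does not depend on the representative. *)
Definition in_phi_image (q : nat) (D : int) (S : ecpt 'F_q) : Prop :=
  exists x0 x1 x2 x3 x4 : 'F_q,
    [/\ CD_eqs D x0 x1 x2 x3 x4, x4 != 0 &
        S = Some (6%:R * x0 ^+ 2 / x4 ^+ 2, 24%:R * x0 * x1 * x2 / x4 ^+ 3)].

Definition inHDq (D : int) (q : nat) (R : ecpt rat) : Prop :=
  inH R /\ in_phi_image D (red q R).

Definition squarefreez (D : int) : Prop :=
  D != 0 /\ forall p : nat, prime p -> ~~ ((p * p)%N %| `|D|)%N.

(* Main.v *)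
Require Import Defs.
From HB Require Import structures.
From mathcomp Require Import all_boot all_order all_algebra all_field.
From mathcomp Require Import ring lra zify.
Import Order.TTheory GRing.Theory Num.Theory.
Set Implicit Arguments. Unset Strict Implicit.
Local Open Scope ring_scope.

Section Gen.
Variable K : fieldType.
Definition fE (x : K) := x * (x + 2%:R) * (x + 6%:R).

Lemma add_generic (x1 y1 x2 y2 : K) :
  y1 ^+ 2 = fE x1 -> y2 ^+ 2 = fE x2 -> x1 != x2 ->
  let l := (y2 - y1) / (x2 - x1) in
  let b := y1 - l * x1 in
  let x3 := l ^+ 2 - 8%:R - x1 - x2 in
  [/\ E1_add (Some (x1, y1)) (Some (x2, y2)) = Some (x3, - (y1 + l * (x3 - x1))),
      (- (y1 + l * (x3 - x1))) ^+ 2 = fE x3,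
      x1 * x2 * x3 = b ^+ 2,
      (x1 + 2%:R) * (x2 + 2%:R) * (x3 + 2%:R) = (b - 2%:R * l) ^+ 2 &
      (x1 + 6%:R) * (x2 + 6%:R) * (x3 + 6%:R) = (b - 6%:R * l) ^+ 2].
Proof.
move=> e1 e2 ne l b x3.
have ne' : x2 - x1 != 0 by rewrite subr_eq0 eq_sym.
set c1 := 12%:R - 2%:R * l * b - (x1 * x2 + x1 * x3 + x2 * x3).
set c0 := - b ^+ 2 + x1 * x2 * x3.
have G : forall x, fE x - (l * x + b) ^+ 2 - (x - x1) * (x - x2) * (x - x3)
                   = c1 * x + c0.
  by move=> x; rewrite /fE /c1 /c0 /x3; ring.
have hy1 : y1 = l * x1 + b by rewrite /b; ring.
have hy2 : y2 = l * x2 + b.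
  rewrite /b /l; field; exact: ne'.
have g1 : c1 * x1 + c0 = 0 by rewrite -G -hy1 e1; ring.
have g2 : c1 * x2 + c0 = 0 by rewrite -G -hy2 e2; ring.
have c10 : c1 = 0.
  have : c1 * (x2 - x1) = 0.
    have -> : c1 * (x2 - x1) = (c1 * x2 + c0) - (c1 * x1 + c0) by ring.
    by rewrite g1 g2 subrr.
  by move/eqP; rewrite mulf_eq0 (negPf ne') orbF => /eqP.
have c00 : c0 = 0 by move: g1; rewrite c10 mul0r add0r.
have Gz : forall x, fE x - (l * x + b) ^+ 2 - (x - x1) * (x - x2) * (x - x3) = 0.
  by move=> x; rewrite G c10 c00; ring.
split.
- rewrite /= (negPf ne) /=; done.
- have := Gz x3; rewrite subrr !mulr0 subr0 => /eqP; rewrite subr_eq0 => /eqP ->.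
  rewrite hy1; ring.
- by move: c00 => /eqP; rewrite /c0 addrC subr_eq0 => /eqP.
- have := Gz (- 2%:R). rewrite /fE => /eqP; rewrite -subr_eq0 => /eqP H.
  rewrite -[LHS]subr0 -H; ring.
- have := Gz (- 6%:R). rewrite /fE => /eqP; rewrite -subr_eq0 => /eqP H.
  rewrite -[LHS]subr0 -H; ring.
Qed.
End Gen.

Lemma no_sqrt (p : nat) : prime p -> forall r : rat, r ^+ 2 != p%:R.
Proof.
move=> pp r; apply/negP => /eqP E.
have hd := denq_neq0 r.
have E2 : (numq r) ^+ 2 = p%:Z * (denq r) ^+ 2.
  apply: (@intr_inj rat); rewrite rmorphXn /= intrM rmorphXn /=.
  rewrite numqE exprMn E //.
have E3 : (`|numq r| ^ 2 = p * `|denq r| ^ 2)%N.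
  by have := congr1 absz E2; rewrite abszX abszM abszX.
have pn : (p %| `|numq r|)%N.
  by have := Euclid_dvdX `|numq r| 2 pp; rewrite E3 dvdn_mulr // andbT.
case/dvdnP: pn => k hk.
have pd : (p %| `|denq r|)%N.
  have := Euclid_dvdX `|denq r| 2 pp; rewrite andbT => <-.
  have E4 : (p * (k ^ 2 * p) = p * `|denq r| ^ 2)%N.
    by rewrite -E3 hk expnMn expnS expn1; lia.
  move/eqP: E4; rewrite eqn_pmul2l ?prime_gt0 // => /eqP <-.
  by rewrite dvdn_mull.
have := coprime_num_den r; rewrite /coprime => /eqP g.
have : (p %| gcdn `|numq r| `|denq r|)%N by rewrite dvdn_gcd hk dvdn_mull // pd.
by rewrite g dvdn1 => /eqP p1; move: pp; rewrite p1.
Qed.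

Definition inv6 (x : rat) := exists a b c : rat,
  [/\ x = 6%:R * a ^+ 2, x + 2%:R = 2%:R * b ^+ 2 & x + 6%:R = 3%:R * c ^+ 2].
Definition inv1 (x : rat) := exists a b c : rat,
  [/\ x = a ^+ 2, x + 2%:R = b ^+ 2 & x + 6%:R = c ^+ 2].

Lemma sq_ge0 (a : rat) : 0 <= a ^+ 2.
Proof. exact: sqr_ge0. Qed.

Lemma inv6_nz x : inv6 x -> [/\ x != 0, x + 2%:R != 0 & x + 6%:R != 0].
Proof.
case=> a [b [c [ha hb hc]]]; split; apply/eqP => E.
- have : c ^+ 2 = 2%:R.
    by apply: (@mulfI _ 3%:R) => //; rewrite -hc E; ring.
  by move/eqP; rewrite (negPf (@no_sqrt 2 isT _)).
- have := sq_ge0 a; have : x = - 2%:R by rewrite -(subr0 x) -E; ring.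
  move=> ex; rewrite ex in ha; lra.
- have := sq_ge0 a; have : x = - 6%:R by rewrite -(subr0 x) -E; ring.
  move=> ex; rewrite ex in ha; lra.
Qed.

Lemma inv1_nz x : inv1 x -> [/\ x != 0, x + 2%:R != 0 & x + 6%:R != 0].
Proof.
case=> a [b [c [ha hb hc]]]; split; apply/eqP => E.
- have : b ^+ 2 = 2%:R by rewrite -hb E add0r.
  by move/eqP; rewrite (negPf (@no_sqrt 2 isT _)).
- have := sq_ge0 a; have : x = - 2%:R by rewrite -(subr0 x) -E; ring.
  move=> ex; rewrite ex in ha; lra.
- have := sq_ge0 a; have : x = - 6%:R by rewrite -(subr0 x) -E; ring.
  move=> ex; rewrite ex in ha; lra.
Qed.

Lemma inv16_neq x : inv1 x -> ~ inv6 x.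
Proof.
move=> h1 h6; have [_ _ nz] := inv6_nz h6.
case: h1 => a [b [c [_ _ hc]]]; case: h6 => a' [b' [c' [_ _ hc']]].
have c'0 : c' != 0 by apply: contra nz; rewrite hc' => /eqP ->; rewrite expr0n mulr0.
have : (c / c') ^+ 2 = 3%:R.
  by rewrite expr_div_n -hc hc'; field.
by move/eqP; rewrite (negPf (@no_sqrt 3 isT _)).
Qed.

Lemma cls_mul (u v a a' s x1 x2 x3 : rat) :
  x1 = u * a ^+ 2 -> x2 = v * a' ^+ 2 -> x1 != 0 -> x2 != 0 ->
  x1 * x2 * x3 = s ^+ 2 -> x3 = u * v * (s / (u * v * a * a')) ^+ 2.
Proof.
move=> h1 h2 n1 n2 E.
have u0 : u != 0 by apply: contra n1; rewrite h1 => /eqP ->; rewrite mul0r.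
have v0 : v != 0 by apply: contra n2; rewrite h2 => /eqP ->; rewrite mul0r.
have a0 : a != 0 by apply: contra n1; rewrite h1 => /eqP ->; rewrite expr0n mulr0.
have a'0 : a' != 0 by apply: contra n2; rewrite h2 => /eqP ->; rewrite expr0n mulr0.
have -> : x3 = s ^+ 2 / (x1 * x2).
  by rewrite -E; field; rewrite n1 n2.
rewrite h1 h2; field.
by rewrite u0 v0 a0 a'0.
Qed.

Lemma P1_inv6 : inv6 6%:R.
Proof. by exists 1, 2%:R, 2%:R; split; ring. Qed.

Lemma P1_double :
  E1_add P1 P1 = Some (4%:R^-1, 15%:R / 8%:R).
Proof.
rewrite /P1 /E1_add !eqxx.
have -> : (24%:R + 24%:R == 0 :> rat) = false by rewrite -natrD pnatr_eq0.
rewrite /=; congr Some; congr pair; field.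
Qed.

Lemma mulnP (m : nat) :
  (odd m -> exists x y, E1_muln m P1 = Some (x, y) /\ y ^+ 2 = fE x /\ inv6 x) /\
  (~~ odd m -> E1_muln m P1 = None \/
     exists x y, E1_muln m P1 = Some (x, y) /\ y ^+ 2 = fE x /\ inv1 x).
Proof.
elim: m => [|m [IHo IHe]]; first by split => //; left.
have eP : (24%:R : rat) ^+ 2 = fE 6%:R by rewrite /fE; ring.
have [a [b [c [ha hb hc]]]] := P1_inv6.
have [n1 n2 n3] := inv6_nz P1_inv6.
have -> : E1_muln m.+1 P1 = E1_add P1 (E1_muln m P1) by []. split.
- move=> om; have em : ~~ odd m by move: om; rewrite /=.
  case: (IHe em) => [-> | [x [y [-> [ey h1]]]]].
    by exists 6%:R, 24%:R; split; [reflexivity | split; [exact: eP | exact: P1_inv6]].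
  have ne : (6%:R : rat) != x by apply/eqP => ex; apply: (inv16_neq h1); rewrite -ex; exact: P1_inv6.
  have [EE ey3 E0 E2 E6] := add_generic eP ey ne; rewrite /P1 EE.
  do 2 eexists; split; first reflexivity; split; first exact: ey3.
  have [a' [b' [c' [ha' hb' hc']]]] := h1.
  have [m1 m2 m3] := inv1_nz h1.
  set l := (y - 24%:R) / (x - 6%:R).
  exists ((24%:R - l * 6%:R) / (6%:R * 1 * a * a')),
         (((24%:R - l * 6%:R) - 2%:R * l) / (2%:R * 1 * b * b')),
         (((24%:R - l * 6%:R) - 6%:R * l) / (3%:R * 1 * c * c')).
  split.
  + have h' : x = 1 * a' ^+ 2 by rewrite mul1r.
    rewrite (cls_mul ha h' n1 m1 E0); rewrite /l; ring.
  + have h' : x + 2%:R = 1 * b' ^+ 2 by rewrite mul1r.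
    rewrite (cls_mul hb h' n2 m2 E2); rewrite /l; ring.
  + have h' : x + 6%:R = 1 * c' ^+ 2 by rewrite mul1r.
    rewrite (cls_mul hc h' n3 m3 E6); rewrite /l; ring.
- move=> om; have odm : odd m by move: om; rewrite /= negbK.
  have [x [y [-> [ey h6]]]] := IHo odm.
  have [a' [b' [c' [ha' hb' hc']]]] := h6.
  have [m1 m2 m3] := inv6_nz h6.
  case: (eqVneq (6%:R : rat) x) => [ex | ne].
    rewrite -ex in ey *.
    have : (y - 24%:R) * (y + 24%:R) = 0.
      by rewrite (_ : (y - 24%:R) * (y + 24%:R) = y ^+ 2 - 24%:R ^+ 2); [rewrite ey -eP subrr | ring].
    move/eqP; rewrite mulf_eq0 => /orP [] /eqP hy.
      have -> : y = 24%:R by rewrite -(subr0 y) -hy; ring.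
      rewrite P1_double; right; do 2 eexists; split; first reflexivity.
      split; first by rewrite /fE; field.
      by exists (2%:R^-1), (3%:R / 2%:R), (5%:R / 2%:R); split; field.
    have -> : y = - 24%:R by rewrite -(subr0 y) -hy; ring.
    left; rewrite /P1 /E1_add eqxx.
    by rewrite subrr eqxx.
  right.
  have [EE ey3 E0 E2 E6] := add_generic eP ey ne; rewrite /P1 EE.
  do 2 eexists; split; first reflexivity; split; first exact: ey3.
  set l := (y - 24%:R) / (x - 6%:R).
  exists (6%:R * ((24%:R - l * 6%:R) / (6%:R * 6%:R * a * a'))),
         (2%:R * (((24%:R - l * 6%:R) - 2%:R * l) / (2%:R * 2%:R * b * b'))),
         (3%:R * (((24%:R - l * 6%:R) - 6%:R * l) / (3%:R * 3%:R * c * c'))).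
  split.
  + rewrite (cls_mul ha ha' n1 m1 E0); rewrite /l; ring.
  + rewrite (cls_mul hb hb' n2 m2 E2); rewrite /l; ring.
  + rewrite (cls_mul hc hc' n3 m3 E6); rewrite /l; ring.
Qed.

Lemma mulz_odd k : ~~ (2 %| k)%Z ->
  exists x y, E1_mulz k P1 = Some (x, y) /\ y ^+ 2 = fE x /\ inv6 x.
Proof.
case: k => n h.
  have on : odd n by move: h; rewrite dvdzE /= dvdn2 negbK.
  have [h1 _] := mulnP n; have [x [y [E [ey h6]]]] := h1 on.
  by exists x, y.
have on : odd n.+1 by move: h; rewrite dvdzE /= dvdn2 negbK.
have [h1 _] := mulnP n.+1; have [x [y [E [ey h6]]]] := h1 on.
exists x, (- y); rewrite /E1_mulz E; split => //; split => //; by rewrite sqrrN.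
Qed.

Section Fq.
Variable q : nat.
Hypothesis pq : prime q.
Hypothesis q3 : (3 < q)%N.
Local Notation F := 'F_q.

Lemma natF0 (n : nat) : (n%:R : F) = 0 -> (q %| n)%N.
Proof. by move=> /eqP; rewrite -(dvdn_pcharf (pchar_Fp pq)). Qed.

Lemma intF0 (z : int) : (z%:~R : F) = 0 -> (q%:Z %| z)%Z.
Proof. by move=> /eqP; rewrite -(dvdz_pcharf (pchar_Fp pq)). Qed.

Lemma intF0' (z : int) : (q%:Z %| z)%Z -> (z%:~R : F) = 0.
Proof. by move=> h; apply/eqP; rewrite -(dvdz_pcharf (pchar_Fp pq)). Qed.

Lemma two_nz : (2%:R : F) != 0.
Proof. apply/eqP => /natF0 /dvdn_leq; move: q3; lia. Qed.
Lemma three_nz : (3%:R : F) != 0.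
Proof. apply/eqP => /natF0 /dvdn_leq; move: q3; lia. Qed.

Lemma int_rel (x a : rat) (t c : nat) : x + t%:R = c%:R * a ^+ 2 ->
  (numq x + t%:Z * denq x) * denq a ^+ 2 = c%:Z * numq a ^+ 2 * denq x.
Proof.
move=> E; apply: (@intr_inj rat).
rewrite !(intrM, intrD, rmorphXn) /= -!pmulrn !numqE.
have -> : (x * (denq x)%:~R + t%:R * (denq x)%:~R) * (denq a)%:~R ^+ 2
   = (x + t%:R) * (denq x)%:~R * (denq a)%:~R ^+ 2 by ring.
rewrite E; ring.
Qed.

Lemma F_rel (x a : rat) (t c : nat) (v : F) : x + t%:R = c%:R * a ^+ 2 ->
  ~~ (q%:Z %| denq x)%Z -> rat_red q x = v ->
  (v + t%:R) * ((denq a)%:~R) ^+ 2 = c%:R * ((numq a)%:~R) ^+ 2.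
Proof.
move=> E nd rv.
have dx : ((denq x)%:~R : F) != 0 by apply/eqP => /intF0; apply/negP.
have := congr1 (fun z : int => (z%:~R : F)) (int_rel E).
rewrite /= !(intrM, intrD, rmorphXn) /= -!pmulrn.
have -> : ((numq x)%:~R : F) = v * (denq x)%:~R by rewrite -rv /rat_red divfK.
move=> H; apply: (mulIf dx); rewrite -H; ring.
Qed.

Lemma natF_nz (n : nat) : (0 < n)%N -> (n < q)%N -> (n%:R : F) != 0.
Proof. move=> n0 nq; apply/eqP => /natF0 /dvdn_leq; lia. Qed.

Lemma six_nz : (6%:R : F) != 0.
Proof. by rewrite (_ : 6%:R = 2%:R * 3%:R) ?mulf_neq0 ?two_nz ?three_nz // -natrM. Qed.

Lemma pow23_nz (a b : nat) : (((2 ^ a) * (3 ^ b))%N%:R : F) != 0.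
Proof. by rewrite natrM !natrX mulf_neq0 // expf_neq0 // ?two_nz ?three_nz. Qed.

Lemma den_nz (a : rat) (e k : F) : k != 0 ->
  e * ((denq a)%:~R) ^+ 2 = k * ((numq a)%:~R) ^+ 2 -> ((denq a)%:~R : F) != 0.
Proof.
move=> k0 E; apply/eqP => d0.
move: E; rewrite d0 expr0n mulr0 => /esym /eqP; rewrite mulf_eq0 (negPf k0) /=.
rewrite expf_eq0 /= => /eqP /intF0 hn.
have hd := intF0 d0.
have := coprime_num_den a; rewrite /coprime => /eqP g.
move: hn hd; rewrite !dvdzE /= => hn hd.
have : (q %| gcdn `|numq a| `|denq a|)%N by rewrite dvdn_gcd hn hd.
by rewrite g dvdn1 => /eqP q1; move: q3; rewrite q1.
Qed.

Lemma ratio (a : rat) (e k : F) : k != 0 ->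
  e * ((denq a)%:~R) ^+ 2 = k * ((numq a)%:~R) ^+ 2 ->
  exists r : F, k * r ^+ 2 = e.
Proof.
move=> k0 E; have d0 := den_nz k0 E.
exists ((numq a)%:~R / (denq a)%:~R).
rewrite expr_div_n mulrA -E; field; exact: d0.
Qed.

Lemma sqrts (x : rat) : inv6 x -> ~~ (q%:Z %| denq x)%Z -> rat_red q x = - 18%:R ->
  exists i s2 s3 : F, [/\ i ^+ 2 = - 1, s2 ^+ 2 = 2%:R & s3 ^+ 2 = 3%:R].
Proof.
move=> [a [b [c [ha hb hc]]]] nd rx.
have ha' : x + 0%:R = 6%:R * a ^+ 2 by rewrite addr0.
have [al hal] := ratio six_nz (F_rel ha' nd rx).
have [be hbe] := ratio two_nz (F_rel hb nd rx).
have [ga hga] := ratio three_nz (F_rel hc nd rx).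
have hal' : al ^+ 2 = - 3%:R.
  apply: (mulfI six_nz); rewrite hal; ring.
have hbe' : be ^+ 2 = - 8%:R.
  apply: (mulfI two_nz); rewrite hbe; ring.
have hga' : ga ^+ 2 = - 4%:R.
  apply: (mulfI three_nz); rewrite hga; ring.
have t0 := two_nz.
have i2 : (ga / 2%:R) ^+ 2 = - 1.
  by rewrite expr_div_n hga'; field; exact: (pow23_nz 2 0).
exists (ga / 2%:R), (be * (ga / 2%:R) / 2%:R), (al * (ga / 2%:R)); split => //.
  by rewrite expr_div_n exprMn i2 hbe'; field; exact: (pow23_nz 2 0).
by rewrite exprMn i2 hal'; ring.
Qed.

Lemma red_curve (x y : rat) : y ^+ 2 = fE x ->
  ~~ (q%:Z %| denq x)%Z -> ~~ (q%:Z %| denq y)%Z ->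
  (rat_red q y) ^+ 2 = fE (rat_red q x).
Proof.
move=> E nx ny.
have dx : ((denq x)%:~R : F) != 0 by apply/eqP => /intF0; apply/negP.
have dy : ((denq y)%:~R : F) != 0 by apply/eqP => /intF0; apply/negP.
have I : numq y ^+ 2 * denq x ^+ 3 =
   numq x * (numq x + 2%:Z * denq x) * (numq x + 6%:Z * denq x) * denq y ^+ 2.
  apply: (@intr_inj rat).
  rewrite !(intrM, intrD, rmorphXn) /= -!pmulrn !numqE.
  have -> : (y * (denq y)%:~R) ^+ 2 * (denq x)%:~R ^+ 3 =
            y ^+ 2 * (denq y)%:~R ^+ 2 * (denq x)%:~R ^+ 3 by ring.
  rewrite E /fE; ring.
have := congr1 (fun z : int => (z%:~R : F)) I.
rewrite /= !(intrM, intrD, rmorphXn) /= -!pmulrn.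
have -> : ((numq x)%:~R : F) = rat_red q x * (denq x)%:~R by rewrite /rat_red divfK.
have -> : ((numq y)%:~R : F) = rat_red q y * (denq y)%:~R by rewrite /rat_red divfK.
move=> H.
apply: (@mulIf _ ((denq x)%:~R ^+ 3 * (denq y)%:~R ^+ 2)); first by rewrite mulf_neq0 // expf_neq0.
rewrite /fE.
have -> : rat_red q y ^+ 2 * ((denq x)%:~R ^+ 3 * (denq y)%:~R ^+ 2) =
   (rat_red q y * (denq y)%:~R) ^+ 2 * (denq x)%:~R ^+ 3 by ring.
rewrite H; ring.
Qed.
End Fq.

Lemma phi_image_D (q : nat) (D D' : int) (S : ecpt 'F_q) :
  (D%:~R : 'F_q) = D'%:~R -> in_phi_image D S <-> in_phi_image D' S.
Proof.
by move=> E; rewrite /in_phi_image /CD_eqs E.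
Qed.

Theorem proposition6p2 (D : int) (q : nat) :
  squarefreez D -> prime q -> (3 < q)%N -> (q%:Z %| D)%Z ->
  (forall R : ecpt rat,
     inHDq D q R <->
     exists k : int, [/\ ~~ (2 %| k)%Z, R = E1_mulz k P1 &
        exists y : 'F_q, red q (E1_mulz k P1) = Some (- 18%:R, y)])
  /\ (forall D' : int, squarefreez D' -> (q%:Z %| D')%Z ->
        forall R : ecpt rat, inHDq D q R <-> inHDq D' q R).
Proof.
move=> _ pq q3 qD.
have D0 : (D%:~R : 'F_q) = 0 := intF0' pq qD.
split; last first.
  move=> D' _ qD' R; rewrite /inHDq.
  have E := phi_image_D (red q R) (etrans D0 (esym (intF0' pq qD'))).
  by split => [[h1 h2] | [h1 h2]]; split => //; apply/E.
move=> R; split.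
- move=> [[k [ok Rk]] [x0 [x1 [x2 [x3 [x4 [eqs x40 ES]]]]]]].
  exists k; split => //; rewrite -Rk ES.
  exists (24%:R * x0 * x1 * x2 / x4 ^+ 3); congr (Some (_, _)).
  move: eqs; rewrite /CD_eqs D0 => /and3P [/eqP e1 /eqP e2 /eqP e3].
  have -> : x0 ^+ 2 = - 3%:R * x4 ^+ 2.
    apply/eqP; rewrite -subr_eq0; apply/eqP.
    rewrite (_ : _ - _ = (x0 ^+ 2 - 2%:R * x1 ^+ 2 + x2 ^+ 2)
       + 2%:R * (x1 ^+ 2 - 2%:R * x2 ^+ 2 + 0 * x3 ^+ 2)
       + 3%:R * (x2 ^+ 2 - 2%:R * 0 * x3 ^+ 2 + x4 ^+ 2)); last by ring.
    by rewrite e1 e2 e3; ring.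
  field; exact: x40.
- move=> [k [ok Rk [y hy]]]; split; first by exists k.
  have [x [yy [Ek [eyy h6]]]] := mulz_odd ok.
  rewrite Rk; move: hy; rewrite Ek /red.
  case: ifP => // /norP [nx ny] Eq.
  have Eq' := Some_inj Eq.
  have rx : rat_red q x = - 18%:R := f_equal fst Eq'.
  have ry : rat_red q yy = y := f_equal snd Eq'.
  clear Eq Eq'.
  have [i [s2 [s3 [i2 s22 s32]]]] := sqrts pq q3 h6 nx rx.
  have cur := red_curve pq eyy nx ny.
  rewrite rx ry in cur.
  have i0 : i != 0 by apply/eqP => i0; move: i2; rewrite i0 expr0n => /eqP; rewrite eq_sym oppr_eq0 oner_eq0.
  set w := 24%:R * s3 * s2 * i.
  have w2 : w ^+ 2 = fE (- 18%:R : 'F_q).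
    rewrite /w /fE (_ : _ ^+ 2 = 576%:R * s3 ^+ 2 * s2 ^+ 2 * i ^+ 2); last by ring.
    rewrite s32 s22 i2; ring.
  have [e [e2 ye]] : exists e : 'F_q, e ^+ 2 = 1 /\ y = e * w.
    have : (y - w) * (y + w) = 0.
      have -> : (y - w) * (y + w) = y ^+ 2 - w ^+ 2 by ring.
      by rewrite cur w2 subrr.
    move/eqP; rewrite mulf_eq0 => /orP [] /eqP h.
      by exists 1; split; [ring | rewrite -(subr0 y) -h; ring].
    by exists (-1); split; [ring | rewrite -(subr0 y) -h; ring].
  exists (e * s3), s2, 1, 0, i; split => //.
    rewrite /CD_eqs D0 exprMn e2 s32 s22 i2.
    by apply/and3P; split; apply/eqP; ring.
  congr (Some (_, _)).
    rewrite rx exprMn e2 s32 i2; field; by rewrite oppr_eq0 oner_eq0.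
  have ni0 : - i != 0 by rewrite oppr_eq0.
  rewrite ry ye /w (_ : i ^+ 3 = - i); last by rewrite exprSr i2 mulN1r.
  apply: (mulIf ni0); rewrite divfK //.
  rewrite (_ : _ * - i = - (e * (24%:R * s3 * s2)) * i ^+ 2); last by ring.
  by rewrite i2; ring.
Qed.
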